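(* Consider the two-species symmetric simple exclusion process on $\mathbb{Z}$ (i.e. $p=q=1/2$) with $N-1$ first-class particles and one second-class particle, started from integer positions $y_1<\cdots<y_N$ where the particle at $y_N$ is the second-class particle. Let $\eta(t)$ be the position of the second-class particle at time $t\ge0$. Then for every $x\in\mathbb{Z}$, \[ \mathbb{P}(\eta(t)=x)=\frac{1}{2\pi i}\oint_c \xi^{x-y_N-1}e^{\left(\frac{1}{2\xi}+\frac{\xi}{2}-1\right)t}\,d\xi, \] where $c$ is a counterclockwise circle centered at the origin of small radius.
   Context: Dynamics: each particle independently waits an exponential time with parameter $1$, then attempts to jump one step to the right or to the left, each with probability $1/2$. A jump to an empty site is performed; a first-class particle attempting to jump onto the site of the second-class particle exchanges positions with it; all other jumps onto occupied sites are suppressed. *)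

(* Defs.v *)
From Stdlib Require Import Reals ZArith List Lra.
From Coquelicot Require Import Coquelicot.
Import ListNotations.
Open Scope R_scope.

(** A configuration stores the positions of the
    first-class particles and the position of the second-class particle. *)
Record state := mkState { fc : list Z ; sc : Z }.

Definition move_first (s : state) (a d : Z) : state :=
  let target := (a + d)%Z in
  if Z.eq_dec target (sc s) then
    (* exchange with the second-class particle *)
    mkState (map (fun b => if Z.eq_dec b a then sc s else b) (fc s)) a
  else if in_dec Z.eq_dec target (fc s) then s
  else mkState (map (fun b => if Z.eq_dec b a then target else b) (fc s)) (sc s).

Definition move_second (s : state) (d : Z) : state :=
  let target := (sc s + d)%Z in
  if in_dec Z.eq_dec target (fc s) then s
  else mkState (fc s) target.

Definition moves (s : state) : list state :=
  flat_map (fun a => [move_first s a (-1)%Z; move_first s a 1%Z]) (fc s)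
  ++ [move_second s (-1)%Z; move_second s 1%Z].

(** One step of the embedded (uniformized) jump chain, acting on a finitely
    supported distribution represented as a weighted list of states.
    Each of the N particles rings at rate 1, so a ring is of a uniformly
    chosen particle (prob 1/N) which then picks a direction (prob 1/2). *)
Definition step (N : nat) (ws : list (R * state)) : list (R * state) :=
  flat_map (fun p => map (fun s' => (fst p / (2 * INR N), s')) (moves (snd p))) ws.

Definition jump_dist (N : nat) (s0 : state) (n : nat) : list (R * state) :=
  Nat.iter n (step N) [(1, s0)].

Definition mass_sc_at (ws : list (R * state)) (x : Z) : R :=
  fold_right (fun p acc => (if Z.eq_dec (sc (snd p)) x then fst p else 0) + acc) 0 ws.

(** P(eta(t) = x): the continuous-time process with independent rate-1
    exponential clocks for each of the N particles is the jump chain run at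
    the ring times of a rate-N Poisson process (uniformization). *)
Definition sc_prob (N : nat) (s0 : state) (t : R) (x : Z) : R :=
  Series (fun n => exp (- (INR N * t)) * (INR N * t) ^ n / INR (fact n)
                   * mass_sc_at (jump_dist N s0 n) x).

Definition init_state (N : nat) (y : nat -> Z) : state :=
  mkState (map y (seq 1 (N - 1))) (y N).

Definition Cexp (z : C) : C := (exp (Re z) * cos (Im z), exp (Re z) * sin (Im z)).

Definition Cpowz (z : C) (k : Z) : C :=
  if (0 <=? k)%Z then Cpow z (Z.to_nat k) else Cinv (Cpow z (Z.to_nat (- k))).

(** (1/(2 pi i)) times the contour integral of f over the counterclockwise
    circle |xi| = r, parametrized by xi = r e^{i theta}, d xi = i xi d theta. *)
Definition circle_integral (f : C -> C) (r : R) : C :=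
  let xi := fun th : R => ((r * cos th)%R, (r * sin th)%R) : C in
  Cmult (Cinv (Cmult (RtoC (2 * PI)) Ci))
        (RInt (V := C_R_CompleteNormedModule)
              (fun th => Cmult (f (xi th)) (Cmult Ci (xi th))) 0 (2 * PI)).

(* Main.v *)
Require Import Defs.
From Stdlib Require Import Reals ZArith List Lra Lia.
From Coquelicot Require Import Coquelicot.
Import ListNotations.
Open Scope R_scope.

Definition lsum (l : list R) : R := fold_right Rplus 0 l.
Definition ind (a b : Z) : R := if Z.eq_dec a b then 1 else 0.

Lemma lsum_app l1 l2 : lsum (l1 ++ l2) = lsum l1 + lsum l2.
Proof. induction l1; simpl; [ring| rewrite IHl1; ring]. Qed.

Lemma lsum_lin {A} (f g : A -> R) a b (l : list A) :
  lsum (map (fun p => a * f p + b * g p) l) = a * lsum (map f l) + b * lsum (map g l).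
Proof. induction l; simpl; [ring| rewrite IHl; ring]. Qed.

Lemma lsum_ext {A} (f g : A -> R) (l : list A) :
  (forall p, In p l -> f p = g p) -> lsum (map f l) = lsum (map g l).
Proof. induction l; simpl; intros H; auto. rewrite H, IHl; auto. Qed.

Lemma lsum_const {A} c (l : list A) : lsum (map (fun _ => c) l) = INR (length l) * c.
Proof. induction l; simpl length; [simpl; ring|]. rewrite S_INR; simpl; rewrite IHl; ring. Qed.

Lemma lsum_scal {A} (f : A -> R) a l : lsum (map (fun p => a * f p) l) = a * lsum (map f l).
Proof. induction l; simpl; [ring| rewrite IHl; ring]. Qed.

Lemma lsum_flat_map {A B} (F : A -> list B) (f : B -> R) l :
  lsum (map f (flat_map F l)) = lsum (map (fun a => lsum (map f (F a))) l).
Proof. induction l; simpl; auto. rewrite map_app, lsum_app, IHl; auto. Qed.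

Lemma lsum_plus {A} (f g : A -> R) l : lsum (map (fun p => f p + g p) l) = lsum (map f l) + lsum (map g l).
Proof. induction l; simpl; [ring| rewrite IHl; ring]. Qed.

Lemma lsum_delta (l : list Z) p v : NoDup l ->
  lsum (map (fun a => if Z.eq_dec a p then v else 0) l) = if in_dec Z.eq_dec p l then v else 0.
Proof.
  induction l as [|a l IH]; intros Hnd; simpl; auto.
  inversion Hnd; subst. rewrite IH by auto.
  destruct (Z.eq_dec a p) as [->|Hne].
  - destruct (in_dec Z.eq_dec p l); [tauto|]. destruct (in_dec Z.eq_dec p (p :: l)) as [_|Hn]; [ring| simpl in Hn; tauto].
  - destruct (in_dec Z.eq_dec p l) as [Hi|Hi]; destruct (in_dec Z.eq_dec p (a :: l)) as [Hj|Hj]; simpl in *; try ring.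


Qed.

Lemma mass_lsum ws x : mass_sc_at ws x = lsum (map (fun p => if Z.eq_dec (sc (snd p)) x then fst p else 0) ws).
Proof. induction ws; simpl; auto. rewrite IHws; auto. Qed.

Definition inv (N : nat) (s : state) : Prop :=
  NoDup (fc s) /\ ~ In (sc s) (fc s) /\ length (fc s) = (N - 1)%nat.

Lemma sc_move_first s a d : sc (move_first s a d) = if Z.eq_dec (a + d) (sc s) then a else sc s.
Proof. unfold move_first. destruct (Z.eq_dec (a+d) (sc s)); auto. destruct (in_dec _ _ _); auto. Qed.

Lemma sc_move_second s d : sc (move_second s d) = if in_dec Z.eq_dec (sc s + d)%Z (fc s) then sc s else (sc s + d)%Z.
Proof. unfold move_second. destruct (in_dec _ _ _); auto. Qed.

Definition countsc (l : list state) (x : Z) : R := lsum (map (fun s => ind (sc s) x) l).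

Lemma countsc_moves N s x : inv N s ->
  countsc (moves s) x = ind (sc s) (x+1) + ind (sc s) (x-1) + 2 * INR (N - 1) * ind (sc s) x.
Proof.
  intros [Hnd [Hsc Hlen]]. unfold countsc, moves.
  rewrite map_app, lsum_app, lsum_flat_map. simpl.
  set (c := sc s).
  rewrite (lsum_ext _ (fun a => 2 * ind c x + ((if Z.eq_dec a (c+1) then ind (c+1) x - ind c x else 0)
     + (if Z.eq_dec a (c-1) then ind (c-1) x - ind c x else 0)))).
  2:{ intros a Ha. rewrite !sc_move_first. fold c. unfold ind.
      destruct (Z.eq_dec (a + -1)%Z c); destruct (Z.eq_dec (a+1)%Z c);
      destruct (Z.eq_dec a (c+1)%Z); destruct (Z.eq_dec a (c-1)%Z); try lia;
      repeat match goal with |- context [Z.eq_dec ?u ?v] => destruct (Z.eq_dec u v) end; try lia; try ring. }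
  rewrite lsum_plus, lsum_const, lsum_plus, !lsum_delta by auto.
  rewrite !sc_move_second. fold c. rewrite Hlen.
  unfold ind.
  destruct (in_dec Z.eq_dec (c+1)%Z (fc s)); destruct (in_dec Z.eq_dec (c-1)%Z (fc s));
  destruct (in_dec Z.eq_dec (c + -1)%Z (fc s)); replace (c + -1)%Z with (c-1)%Z in * by lia; try tauto;
  repeat match goal with |- context [Z.eq_dec ?u ?v] => destruct (Z.eq_dec u v) end; try lia; try ring.
Qed.

Lemma NoDup_map_replace (l : list Z) a b : NoDup l -> ~ In b l ->
  NoDup (map (fun u => if Z.eq_dec u a then b else u) l).
Proof.
  induction l as [|c l IH]; intros Hnd Hb; simpl; constructor.
  - inversion Hnd; subst. intros Hin. apply in_map_iff in Hin as [u [Hu Hin]].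
    destruct (Z.eq_dec c a); destruct (Z.eq_dec u a); subst.
    + tauto.
    + apply Hb; simpl; auto.
    + apply Hb; simpl; auto.
    + tauto.
  - inversion Hnd; subst. apply IH; auto. intro; apply Hb; simpl; auto.
Qed.

Lemma in_map_replace (l : list Z) a b v : In v (map (fun u => if Z.eq_dec u a then b else u) l) ->
  v = b \/ (In v l /\ v <> a).
Proof.
  intros Hin. apply in_map_iff in Hin as [u [Hu Hin]].
  destruct (Z.eq_dec u a); subst; auto.
Qed.

Lemma inv_moves N s s' : inv N s -> In s' (moves s) -> inv N s'.
Proof.
  intros [Hnd [Hsc Hlen]] Hin. unfold moves in Hin.
  apply in_app_or in Hin as [Hin|Hin].
  - apply in_flat_map in Hin as [a [Ha Hin]].
    assert (Hmf : forall d, inv N (move_first s a d)).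
    { intros d. unfold move_first.
      destruct (Z.eq_dec (a + d) (sc s)) as [He|He].
      + split; [|split]; simpl.
        * apply NoDup_map_replace; auto.
        * intros Hi. apply in_map_replace in Hi as [Hi|[Hi Hi']]; [|tauto].
          subst. apply Hsc; auto.
        * rewrite length_map; auto.
      + destruct (in_dec Z.eq_dec (a+d)%Z (fc s)).
        * split; auto.
        * split; [|split]; simpl.
          -- apply NoDup_map_replace; auto.
          -- intros Hi. apply in_map_replace in Hi as [Hi|[Hi Hi']]; [congruence|tauto].
          -- rewrite length_map; auto. }
    simpl in Hin. destruct Hin as [<-|[<-|[]]]; apply Hmf.
  - simpl in Hin. unfold move_second in Hin.
    destruct Hin as [<-|[<-|[]]]; destruct (in_dec _ _ _);
    solve [repeat split; simpl; auto].
Qed.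

Lemma inv_step N ws : (forall p, In p ws -> inv N (snd p)) ->
  forall p, In p (step N ws) -> inv N (snd p).
Proof.
  intros H p Hp. unfold step in Hp. apply in_flat_map in Hp as [q [Hq Hp]].
  apply in_map_iff in Hp as [s' [<- Hs']]. simpl. eapply inv_moves; eauto.
Qed.

Lemma mass_map w l x : mass_sc_at (map (fun s' => (w, s')) l) x = w * countsc l x.
Proof.
  rewrite mass_lsum. unfold countsc. rewrite map_map. simpl.
  rewrite <- lsum_scal. apply lsum_ext. intros p _. unfold ind.
  destruct (Z.eq_dec _ _); ring.
Qed.

Lemma mass_step N ws x : (1 <= N)%nat -> (forall p, In p ws -> inv N (snd p)) ->
  mass_sc_at (step N ws) x =
  / (2 * INR N) * (mass_sc_at ws (x+1) + mass_sc_at ws (x-1)) + INR (N-1) / INR N * mass_sc_at ws x.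
Proof.
  intros HN H. assert (HN' : INR N <> 0) by (apply not_0_INR; lia).
  induction ws as [|p ws IH]; simpl.
  - ring.
  - unfold step in *. simpl. rewrite mass_lsum, map_app, lsum_app, <- !mass_lsum.
    rewrite IH by (intros; apply H; simpl; auto).
    rewrite mass_map, (countsc_moves N) by (apply H; simpl; auto).
    unfold ind. destruct (Z.eq_dec (sc (snd p)) (x+1)); destruct (Z.eq_dec (sc (snd p)) (x-1));
    destruct (Z.eq_dec (sc (snd p)) x); try lia; field; auto.
Qed.

Lemma y_mono (N : nat) (y : nat -> Z) :
  (forall i : nat, (1 <= i)%nat -> (i < N)%nat -> (y i < y (S i))%Z) ->
  forall i j, (1 <= i)%nat -> (i < j)%nat -> (j <= N)%nat -> (y i < y j)%Z.
Proof.
  intros H i j Hi Hij. induction Hij; intros Hj.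
  - apply H; lia.
  - specialize (IHHij ltac:(lia)). specialize (H m ltac:(lia) ltac:(lia)). lia.
Qed.

Lemma init_inv N y : (1 <= N)%nat ->
  (forall i : nat, (1 <= i)%nat -> (i < N)%nat -> (y i < y (S i))%Z) ->
  inv N (init_state N y).
Proof.
  intros HN H. pose proof (y_mono N y H) as Hm.
  unfold inv, init_state; simpl. split; [|split].
  - assert (G : forall n a, (1 <= a)%nat -> (a + n <= N)%nat -> NoDup (map y (seq a n))).
    { induction n; intros a Ha Han; simpl; constructor.
      - intros Hin. apply in_map_iff in Hin as [j [Hj Hin]]. apply in_seq in Hin.
        assert (y a < y j)%Z by (apply Hm; lia). lia.
      - apply IHn; lia. }
    apply G; lia.
  - intros Hin. apply in_map_iff in Hin as [j [Hj Hin]]. apply in_seq in Hin.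
    assert (y j < y N)%Z by (apply Hm; lia). lia.
  - rewrite length_map, length_seq; auto.
Qed.

Section M.
Variables (N : nat) (y : nat -> Z).
Hypothesis HN : (1 <= N)%nat.
Hypothesis Hy : forall i : nat, (1 <= i)%nat -> (i < N)%nat -> (y i < y (S i))%Z.

Definition m (n : nat) (x : Z) : R := mass_sc_at (jump_dist N (init_state N y) n) x.

Lemma jump_inv n : forall p, In p (jump_dist N (init_state N y) n) -> inv N (snd p).
Proof.
  induction n; simpl.
  - intros p [<-|[]]. apply init_inv; auto.
  - apply inv_step. apply IHn.
Qed.

Lemma m_S n x : m (S n) x = / (2 * INR N) * (m n (x+1) + m n (x-1)) + INR (N-1) / INR N * m n x.
Proof. unfold m. simpl. apply mass_step; auto. apply jump_inv. Qed.

Lemma m_0 x : m 0 x = if Z.eq_dec (y N) x then 1 else 0.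
Proof. unfold m. simpl. destruct (Z.eq_dec _ _); ring. Qed.

Lemma m_bounds n : forall x, 0 <= m n x <= 1.
Proof.
  assert (HN' : 1 <= INR N) by (apply (le_INR 1); auto).
  assert (HN1 : INR (N - 1) = INR N - 1) by (rewrite minus_INR by auto; simpl; ring).
  induction n; intros x.
  - rewrite m_0. destruct (Z.eq_dec _ _); lra.
  - rewrite m_S, HN1. destruct (IHn (x+1)%Z), (IHn (x-1)%Z), (IHn x).
    assert (0 < / (2 * INR N)) by (apply Rinv_0_lt_compat; lra).
    assert (0 <= (INR N - 1) / INR N) by (apply Rdiv_le_0_compat; lra).
    split.
    + apply Rplus_le_le_0_compat; apply Rmult_le_pos; lra.
    + apply Rle_trans with (/ (2 * INR N) * 2 + (INR N - 1) / INR N * 1).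
      * apply Rplus_le_compat; apply Rmult_le_compat_l; lra.
      * right. field. lra.
Qed.
End M.

Lemma C_eq (u v : C) : fst u = fst v -> snd u = snd v -> u = v.
Proof. destruct u, v; simpl; intros; subst; auto. Qed.

Lemma scal_C (c : R) (z : C) : @scal R_AbsRing C_R_NormedModule c z = Cmult (RtoC c) z.
Proof. destruct z as [a b]. change (@scal R_AbsRing C_R_NormedModule c (a,b)) with ((c*a)%R, (c*b)%R). apply C_eq; simpl; ring. Qed.

Lemma plus_C (u v : C) : @plus C_R_NormedModule u v = Cplus u v.
Proof. destruct u, v. reflexivity. Qed.

Definition zeta (r th : R) : C := ((r * cos th)%R, (r * sin th)%R).
Definition Pk (r : R) (k : Z) (th : R) : C :=
  ((powerRZ r k * cos (IZR k * th))%R, (powerRZ r k * sin (IZR k * th))%R).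

Lemma Cinv_zeta r th : 0 < r -> Cinv (zeta r th) = ((cos th / r)%R, (- sin th / r)%R).
Proof.
  intros Hr. unfold Cinv, zeta; cbn [fst snd].
  assert (E : (r * cos th) ^ 2 + (r * sin th) ^ 2 = r * r).
  { pose proof (sin2_cos2 th). unfold Rsqr in H. nra. }
  rewrite E. f_equal; field; lra.
Qed.

Lemma Pk_succ r k th : 0 < r -> Pk r (k+1) th = Cmult (Pk r k th) (zeta r th).
Proof.
  intros Hr. unfold Pk, zeta, Cmult; simpl.
  rewrite powerRZ_add by lra. simpl. rewrite plus_IZR, Rmult_plus_distr_r, Rmult_1_l, cos_plus, sin_plus.
  f_equal; ring.
Qed.

Lemma Pk_pred r k th : 0 < r -> Pk r (k-1) th = Cmult (Pk r k th) (Cinv (zeta r th)).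
Proof.
  intros Hr. rewrite Cinv_zeta by auto. unfold Pk, Cmult; simpl.
  replace (k - 1)%Z with (k + (-1))%Z by lia.
  rewrite powerRZ_add by lra. simpl. rewrite plus_IZR, Rmult_plus_distr_r, cos_plus, sin_plus.
  replace (IZR (-1) * th) with (- th) by (simpl; ring).
  rewrite cos_neg, sin_neg. f_equal; field; lra.
Qed.

Lemma Cpow_zeta r th n : 0 < r -> Cpow (zeta r th) n = Pk r (Z.of_nat n) th.
Proof.
  intros Hr. induction n.
  - unfold Pk; simpl. apply C_eq; simpl; rewrite Rmult_0_l; try rewrite cos_0; try rewrite sin_0; ring.
  - simpl Cpow. rewrite IHn, Nat2Z.inj_succ, <- Z.add_1_r, Pk_succ by auto. apply Cmult_comm.
Qed.

Lemma Cpowz_zeta r th j : 0 < r -> Cpowz (zeta r th) j = Pk r j th.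
Proof.
  intros Hr. unfold Cpowz. destruct (Z.leb_spec 0 j).
  - rewrite Cpow_zeta by auto. rewrite Z2Nat.id by lia. auto.
  - rewrite Cpow_zeta by auto. rewrite Z2Nat.id by lia.
    unfold Cinv, Pk; cbn [fst snd].
    set (n := (- j)%Z). replace j with (- n)%Z by lia.
    rewrite opp_IZR. replace (- IZR n * th) with (- (IZR n * th)) by ring.
    rewrite cos_neg, sin_neg.
    assert (Hp : 0 < powerRZ r n) by (apply powerRZ_lt; auto).
    assert (E : (powerRZ r n * cos (IZR n * th)) ^ 2 + (powerRZ r n * sin (IZR n * th)) ^ 2
                = powerRZ r n * powerRZ r n).
    { pose proof (sin2_cos2 (IZR n * th)) as H2. unfold Rsqr in H2.
      transitivity (powerRZ r n * powerRZ r n * (sin (IZR n * th) * sin (IZR n * th) + cos (IZR n * th) * cos (IZR n * th))); [ring|]. rewrite H2; ring. }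
    rewrite E. rewrite powerRZ_neg'.
    f_equal; field; lra.
Qed.

Lemma sin_2kpi k : sin (IZR k * (2 * PI)) = 0.
Proof. apply sin_eq_0_1. exists (2 * k)%Z. rewrite mult_IZR. simpl. ring. Qed.

Lemma cos_2kpi k : cos (IZR k * (2 * PI)) = 1.
Proof.
  replace (IZR k * (2 * PI)) with (2 * (IZR k * PI)) by ring.
  rewrite cos_2a_sin. rewrite sin_eq_0_1 by (exists k; auto). ring.
Qed.

Lemma is_RInt_val {V : NormedModule R_AbsRing} (f : R -> V) a b l l' : is_RInt f a b l -> l = l' -> is_RInt f a b l'.
Proof. intros H <-; auto. Qed.

Lemma Pk_int r k : 0 < r ->
  is_RInt (V := C_R_NormedModule) (Pk r k) 0 (2 * PI) (RtoC (2 * PI * if Z.eq_dec k 0 then 1 else 0)).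
Proof.
  intros Hr. destruct (Z.eq_dec k 0) as [->|Hk].
  - replace (RtoC (2 * PI * 1)) with (@scal R_AbsRing C_R_NormedModule (2 * PI - 0) (RtoC 1))
      by (rewrite scal_C; apply C_eq; simpl; ring).
    eapply is_RInt_ext; [|apply (is_RInt_const (V := C_R_NormedModule) 0 (2*PI) (RtoC 1))].
    intros x _. unfold Pk. apply C_eq; cbn [fst snd]; rewrite Rmult_0_l; [rewrite cos_0|rewrite sin_0]; simpl; ring.
  - assert (Hk' : IZR k <> 0) by (apply not_0_IZR; auto).
    replace (RtoC (2 * PI * 0)) with ((0%R, 0%R) : C) by (apply C_eq; simpl; ring).
    apply (is_RInt_fct_extend_pair (U := R_NormedModule) (V := R_NormedModule)); unfold Pk; cbn [fst snd].
    + eapply is_RInt_val.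
      apply (is_RInt_derive (V := R_CompleteNormedModule) (fun x => powerRZ r k * sin (IZR k * x) / IZR k)).
      3: { rewrite sin_2kpi, (Rmult_0_r (IZR k)), sin_0; unfold minus, plus, opp; simpl; field; auto. }
      * intros x _. auto_derive; auto. field; auto.
      * intros x _. apply (ex_derive_continuous (V := R_NormedModule)). auto_derive; auto.
    + eapply is_RInt_val.
      apply (is_RInt_derive (V := R_CompleteNormedModule) (fun x => - powerRZ r k * cos (IZR k * x) / IZR k)).
      3: { rewrite cos_2kpi, (Rmult_0_r (IZR k)), cos_0; unfold minus, plus, opp; simpl; field; auto. }
      * intros x _. auto_derive; auto. field; auto.
      * intros x _. apply (ex_derive_continuous (V := R_NormedModule)). auto_derive; auto.
Qed.

Definition Lz (N : nat) (r th : R) : C :=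
  Cplus (Cmult (RtoC (/ (2 * INR N))) (Cplus (zeta r th) (Cinv (zeta r th)))) (RtoC (INR (N - 1) / INR N)).

Lemma Pk_L N r k th : 0 < r ->
  Cmult (Pk r k th) (Lz N r th) =
  Cplus (Cmult (RtoC (/ (2 * INR N))) (Cplus (Pk r (k+1) th) (Pk r (k-1) th)))
        (Cmult (RtoC (INR (N - 1) / INR N)) (Pk r k th)).
Proof. intros Hr. rewrite Pk_succ, Pk_pred by auto. unfold Lz. ring. Qed.

Section J.
Variables (N : nat) (y : nat -> Z).
Hypothesis HN : (1 <= N)%nat.
Hypothesis Hy : forall i : nat, (1 <= i)%nat -> (i < N)%nat -> (y i < y (S i))%Z.
Variable r : R.
Hypothesis Hr : 0 < r.

Lemma J_int n : forall k,
  is_RInt (V := C_R_NormedModule) (fun th => Cmult (Pk r k th) (Cpow (Lz N r th) n)) 0 (2 * PI)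
     (RtoC (2 * PI * m N y n (y N + k))).
Proof.
  induction n; intros k.
  - rewrite m_0 by auto. eapply is_RInt_val; [eapply is_RInt_ext; [|apply (Pk_int r k Hr)]|].
    + intros x _. simpl. ring.
    + f_equal. f_equal. destruct (Z.eq_dec k 0); destruct (Z.eq_dec (y N) (y N + k)); auto; lia.
  - eapply is_RInt_val.
    + eapply is_RInt_ext.
      2:{ apply (is_RInt_plus (V := C_R_NormedModule)).
          - eapply (is_RInt_scal (V := C_R_NormedModule) _ _ _ (/ (2 * INR N)) _).
            apply (is_RInt_plus (V := C_R_NormedModule)); [apply (IHn (k+1)%Z)|apply (IHn (k-1)%Z)].
          - eapply (is_RInt_scal (V := C_R_NormedModule) _ _ _ (INR (N - 1) / INR N) _). apply (IHn k). }
      intros x _. cbv beta. repeat (rewrite ?plus_C, ?scal_C); repeat match goal with |- context [@plus ?G ?a ?b] => change (@plus G a b) with (Cplus a b) end. simpl Cpow. match goal with |- ?a = ?b => change (@eq C a b) end.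
      transitivity (Cmult (Cmult (Pk r k x) (Lz N r x)) (Cpow (Lz N r x) n)); [|ring].
      rewrite Pk_L by auto. ring.
    + repeat (rewrite ?plus_C, ?scal_C); repeat match goal with |- context [@plus ?G ?a ?b] => change (@plus G a b) with (Cplus a b) end; rewrite (m_S N y HN Hy).
      replace (y N + k + 1)%Z with (y N + (k+1))%Z by lia.
      replace (y N + k - 1)%Z with (y N + (k-1))%Z by lia.
      apply C_eq; simpl; ring.
Qed.
End J.

Lemma fst_le_Cmod (w : C) : Rabs (fst w) <= Cmod w.
Proof. eapply Rle_trans; [apply Rmax_l|apply Rmax_Cmod]. Qed.
Lemma snd_le_Cmod (w : C) : Rabs (snd w) <= Cmod w.
Proof. eapply Rle_trans; [apply Rmax_r|apply Rmax_Cmod]. Qed.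

Lemma exp_series_pos (x : R) : is_series (fun n => x ^ n / INR (fact n)) (exp x).
Proof.
  pose proof (is_exp_Reals x) as H. unfold is_pseries in H.
  eapply is_series_ext; [|apply H]. intros n. simpl. rewrite pow_n_pow. unfold scal; simpl. unfold mult; simpl. unfold Rdiv. ring.
Qed.

Section RAD.
Variable (c : nat -> R) (K : R).
Hypothesis Hc : forall n, Rabs (c n) <= K ^ n.
Hypothesis HK : 0 <= K.
Definition ww n := c n / INR (fact n).

Lemma ww_bound n x : Rabs (ww n * x ^ n) <= (K * Rabs x) ^ n / INR (fact n).
Proof.
  unfold ww. rewrite Rabs_mult, <- RPow_abs, Rpow_mult_distr, Rabs_div by (apply INR_fact_neq_0).
  rewrite (Rabs_pos_eq (INR (fact n))) by (apply pos_INR).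
  pose proof (Hc n).
  pose proof (INR_fact_lt_0 n). pose proof (pow_le (Rabs x) n (Rabs_pos x)).
  unfold Rdiv. apply Rle_trans with (K ^ n * / INR (fact n) * Rabs x ^ n).
  - apply Rmult_le_compat_r; auto. apply Rmult_le_compat_r; auto. left; apply Rinv_0_lt_compat; auto.
  - right; ring.
Qed.

Lemma ww_disk x : CV_disk ww x.
Proof.
  unfold CV_disk. apply (ex_series_le (K := R_AbsRing) (V := R_CompleteNormedModule) _ (fun n => (K * Rabs x) ^ n / INR (fact n))).
  - intros n. unfold norm; simpl. unfold abs; simpl. rewrite Rabs_Rabsolu. apply ww_bound.
  - eexists. apply exp_series_pos.
Qed.

Lemma ww_radius x : Rbar_lt (Rabs x) (CV_radius ww).
Proof.
  assert (H : Rbar_le (Rabs x + 1) (CV_radius ww)).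
  { destruct (Lub_Rbar_correct (CV_disk ww)) as [H _]. apply H. apply ww_disk. }
  destruct (CV_radius ww) as [l| |]; simpl in *; auto; lra.
Qed.

Lemma ww_pseries x : is_pseries ww x (PSeries ww x).
Proof. apply PSeries_correct. apply CV_radius_inside. apply ww_radius. Qed.
End RAD.

Section EXP.
Variable z : C.
Definition uu n := fst (Cpow z n).
Definition vv n := snd (Cpow z n).
Lemma uu_b n : Rabs (uu n) <= Cmod z ^ n.
Proof. unfold uu. rewrite <- Cmod_pow. apply fst_le_Cmod. Qed.
Lemma vv_b n : Rabs (vv n) <= Cmod z ^ n.
Proof. unfold vv. rewrite <- Cmod_pow. apply snd_le_Cmod. Qed.
Let HK := Cmod_ge_0 z.
Definition PP := PSeries (ww uu).
Definition QQ := PSeries (ww vv).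

Lemma PS_derive_uu : forall n, PS_derive (ww uu) n = fst z * ww uu n - snd z * ww vv n.
Proof.
  intros n. unfold PS_derive, ww, uu, vv.
  replace (INR (fact (S n))) with (INR (S n) * INR (fact n)) by (rewrite <- mult_INR; reflexivity).
  simpl Cpow. destruct z as [a b]. destruct (Cpow (a,b) n) as [p q].
  unfold Cmult; cbn [fst snd].
  pose proof (INR_fact_neq_0 n). assert (INR (S n) <> 0) by (apply not_0_INR; lia).
  field; auto.
Qed.

Lemma PS_derive_vv : forall n, PS_derive (ww vv) n = fst z * ww vv n + snd z * ww uu n.
Proof.
  intros n. unfold PS_derive, ww, uu, vv.
  replace (INR (fact (S n))) with (INR (S n) * INR (fact n)) by (rewrite <- mult_INR; reflexivity).
  simpl Cpow. destruct z as [a b]. destruct (Cpow (a,b) n) as [p q].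
  unfold Cmult; cbn [fst snd].
  pose proof (INR_fact_neq_0 n). assert (INR (S n) <> 0) by (apply not_0_INR; lia).
  field; auto.
Qed.

Lemma PP_derive s : derivable_pt_lim PP s (fst z * PP s - snd z * QQ s).
Proof.
  apply is_derive_Reals. unfold PP, QQ.
  replace (fst z * PSeries (ww uu) s - snd z * PSeries (ww vv) s) with (PSeries (PS_derive (ww uu)) s).
  - apply is_derive_PSeries. apply (ww_radius uu (Cmod z) uu_b).
  - apply is_pseries_unique.
    pose proof (ww_pseries uu (Cmod z) uu_b s) as H1.
    pose proof (ww_pseries vv (Cmod z) vv_b s) as H2.
    apply (is_pseries_scal (K := R_AbsRing) (V := R_NormedModule) (fst z)) in H1; [|unfold mult; simpl; ring].
    apply (is_pseries_scal (K := R_AbsRing) (V := R_NormedModule) (snd z)) in H2; [|unfold mult; simpl; ring].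
    pose proof (is_pseries_minus (K := R_AbsRing) (V := R_NormedModule) _ _ _ _ _ H1 H2) as H.
    unfold is_pseries in *. eapply is_series_ext; [|apply H].
    + intros n. rewrite PS_derive_uu. unfold PS_minus, PS_scal, scal, plus, opp, mult; simpl. unfold mult; simpl. ring.
Qed.

Lemma QQ_derive s : derivable_pt_lim QQ s (fst z * QQ s + snd z * PP s).
Proof.
  apply is_derive_Reals. unfold PP, QQ.
  replace (fst z * PSeries (ww vv) s + snd z * PSeries (ww uu) s) with (PSeries (PS_derive (ww vv)) s).
  - apply is_derive_PSeries. apply (ww_radius vv (Cmod z) vv_b).
  - apply is_pseries_unique.
    pose proof (ww_pseries uu (Cmod z) uu_b s) as H1.
    pose proof (ww_pseries vv (Cmod z) vv_b s) as H2.
    apply (is_pseries_scal (K := R_AbsRing) (V := R_NormedModule) (snd z)) in H1; [|unfold mult; simpl; ring].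
    apply (is_pseries_scal (K := R_AbsRing) (V := R_NormedModule) (fst z)) in H2; [|unfold mult; simpl; ring].
    pose proof (is_pseries_plus (K := R_AbsRing) (V := R_NormedModule) _ _ _ _ _ H2 H1) as H.
    unfold is_pseries in *. eapply is_series_ext; [|apply H].
    intros n. rewrite PS_derive_vv. unfold PS_plus, PS_scal, scal, plus, mult; simpl. unfold mult; simpl. ring.
Qed.

Definition W1 s := exp (- (fst z * s)) * (cos (snd z * s) * PP s + sin (snd z * s) * QQ s).
Definition W2 s := exp (- (fst z * s)) * (cos (snd z * s) * QQ s - sin (snd z * s) * PP s).

Lemma PP_is s : is_derive PP s (fst z * PP s - snd z * QQ s).
Proof. apply is_derive_Reals, PP_derive. Qed.
Lemma QQ_is s : is_derive QQ s (fst z * QQ s + snd z * PP s).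
Proof. apply is_derive_Reals, QQ_derive. Qed.

Lemma W1_der s : is_derive W1 s 0.
Proof.
  unfold W1. auto_derive.
  - repeat split; eexists; [apply PP_is|apply QQ_is].
  - change (fun x : R => PP x) with PP; change (fun x : R => QQ x) with QQ. rewrite (is_derive_unique _ _ _ (PP_is s)), (is_derive_unique _ _ _ (QQ_is s)). ring.
Qed.

Lemma W2_der s : is_derive W2 s 0.
Proof.
  unfold W2. auto_derive.
  - repeat split; eexists; [apply QQ_is|apply PP_is].
  - change (fun x : R => PP x) with PP; change (fun x : R => QQ x) with QQ. rewrite (is_derive_unique _ _ _ (PP_is s)), (is_derive_unique _ _ _ (QQ_is s)). ring.
Qed.

Lemma PP_QQ_1 : PP 1 = exp (fst z) * cos (snd z) /\ QQ 1 = exp (fst z) * sin (snd z).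
Proof.
  assert (E1 : W1 1 = W1 0) by (symmetry; apply (eq_is_derive (V := R_NormedModule)); [intros; apply W1_der|lra]).
  assert (E2 : W2 1 = W2 0) by (symmetry; apply (eq_is_derive (V := R_NormedModule)); [intros; apply W2_der|lra]).
  unfold W1, W2 in *. unfold PP, QQ in *. rewrite !PSeries_0 in *.
  unfold ww, uu, vv in *. simpl in E1, E2.
  rewrite !Rmult_0_r, Ropp_0, exp_0, cos_0, sin_0, !Rmult_1_r in E1, E2.
  set (P := PSeries (fun n : nat => fst (Cpow z n) / INR (fact n)) 1) in *.
  set (Q := PSeries (fun n : nat => snd (Cpow z n) / INR (fact n)) 1) in *.
  assert (Ha : exp (- fst z) * exp (fst z) = 1) by (rewrite <- exp_plus; replace (- fst z + fst z) with 0 by ring; apply exp_0).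
  pose proof (sin2_cos2 (snd z)) as Hsc. unfold Rsqr in Hsc.
  assert (E1' : cos (snd z) * P + sin (snd z) * Q = exp (fst z)).
  { apply (Rmult_eq_reg_l (exp (- fst z))); [|apply Rgt_not_eq, exp_pos]. rewrite Ha. lra. }
  assert (E2' : cos (snd z) * Q - sin (snd z) * P = 0).
  { apply (Rmult_eq_reg_l (exp (- fst z))); [|apply Rgt_not_eq, exp_pos]. lra. }
  split.
  - transitivity (cos (snd z) * (cos (snd z) * P + sin (snd z) * Q) - sin (snd z) * (cos (snd z) * Q - sin (snd z) * P)).
    + transitivity (P * (sin (snd z) * sin (snd z) + cos (snd z) * cos (snd z))); [rewrite Hsc; ring|ring].
    + rewrite E1', E2'. ring.
  - transitivity (sin (snd z) * (cos (snd z) * P + sin (snd z) * Q) + cos (snd z) * (cos (snd z) * Q - sin (snd z) * P)).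
    + transitivity (Q * (sin (snd z) * sin (snd z) + cos (snd z) * cos (snd z))); [rewrite Hsc; ring|ring].
    + rewrite E1', E2'. ring.
Qed.

Lemma pseries_1 (a : nat -> R) l : is_pseries a 1 l -> is_series a l.
Proof.
  unfold is_pseries. apply is_series_ext. intros n. rewrite pow_n_pow, pow1. unfold scal; simpl. unfold mult; simpl. ring.
Qed.

Lemma exp_fst : is_series (fun n => fst (Cpow z n) / INR (fact n)) (exp (fst z) * cos (snd z)).
Proof.
  destruct PP_QQ_1 as [H _]. rewrite <- H. apply pseries_1. apply (ww_pseries uu (Cmod z) uu_b).
Qed.
Lemma exp_snd : is_series (fun n => snd (Cpow z n) / INR (fact n)) (exp (fst z) * sin (snd z)).
Proof.
  destruct PP_QQ_1 as [_ H]. rewrite <- H. apply pseries_1. apply (ww_pseries vv (Cmod z) vv_b).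
Qed.
End EXP.

Lemma ball_R (x e y : R) : ball (M := R_UniformSpace) x e y <-> Rabs (y - x) < e.
Proof. reflexivity. Qed.

Lemma series_ev (a : nat -> R) l : is_series a l ->
  forall eps : posreal, eventually (fun M => Rabs (sum_n a M - l) < eps).
Proof.
  intros H eps. unfold is_series in H. pose proof (proj1 (filterlim_locally (F := eventually) (U := R_UniformSpace) (sum_n a) l) H eps) as H'.
  clear H. rename H' into H. revert H. apply filter_imp. intros M HM. apply ball_R in HM. auto.
Qed.

Lemma tail_bound (a b : nat -> R) la lb : is_series a la -> is_series b lb ->
  (forall n, Rabs (a n) <= b n) -> forall M, Rabs (la - sum_n a M) <= lb - sum_n b M.
Proof.
  intros Ha Hb Hab M.
  assert (Eb : ex_series b) by (eexists; eauto).
  assert (Ea : ex_series a) by (eexists; eauto).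
  rewrite <- (is_series_unique a la Ha), <- (is_series_unique b lb Hb).
  rewrite (Series_incr_n a (S M)), (Series_incr_n b (S M)) by (auto; lia).
  rewrite !sum_n_Reals. simpl pred.
  replace (sum_f_R0 a M + Series (fun k => a (S M + k)%nat) - sum_f_R0 a M) with (Series (fun k => a (S M + k)%nat)) by ring.
  replace (sum_f_R0 b M + Series (fun k => b (S M + k)%nat) - sum_f_R0 b M) with (Series (fun k => b (S M + k)%nat)) by ring.
  assert (Eb' : ex_series (fun k => b (S M + k)%nat)) by (apply (ex_series_incr_n (K := R_AbsRing) (V := R_NormedModule)); auto).
  eapply Rle_trans; [apply Series_Rabs|apply Series_le].
  - apply (ex_series_le (K := R_AbsRing) (V := R_CompleteNormedModule) _ (fun k => b (S M + k)%nat)); auto.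
    intros n. unfold norm; simpl. unfold abs; simpl. rewrite Rabs_Rabsolu. apply Hab.
  - intros n. split; [apply Rabs_pos|apply Hab].
  - auto.
Qed.

Lemma lim_unique_R (u : nat -> R) a b :
  (forall eps : posreal, eventually (fun M => Rabs (u M - a) < eps)) ->
  (forall eps : posreal, eventually (fun M => Rabs (u M - b) < eps)) -> a = b.
Proof.
  intros Ha Hb. destruct (Req_dec a b) as [|Hne]; auto. exfalso.
  assert (Hp : 0 < Rabs (a - b) / 2) by (apply Rdiv_lt_0_compat; [apply Rabs_pos_lt; lra|lra]).
  destruct (Ha (mkposreal _ Hp)) as [N1 H1]. destruct (Hb (mkposreal _ Hp)) as [N2 H2].
  specialize (H1 (N1 + N2)%nat ltac:(lia)). specialize (H2 (N1 + N2)%nat ltac:(lia)). simpl in *.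
  assert (Rabs (a - b) <= Rabs (u (N1 + N2)%nat - a) + Rabs (u (N1 + N2)%nat - b)).
  { replace (a - b) with (- (u (N1+N2)%nat - a) + (u (N1+N2)%nat - b)) by ring.
    eapply Rle_trans; [apply Rabs_triang|]. rewrite Rabs_Ropp. lra. }
  lra.
Qed.

Lemma zeta_nz r th : 0 < r -> zeta r th <> RtoC 0.
Proof.
  intros Hr H. unfold zeta, RtoC in H. injection H as H1 H2.
  pose proof (sin2_cos2 th) as Hs. unfold Rsqr in Hs.
  assert (cos th = 0) by (apply (Rmult_eq_reg_l r); lra).
  assert (sin th = 0) by (apply (Rmult_eq_reg_l r); lra).
  rewrite H, H0 in Hs. lra.
Qed.

Lemma Cmod_le_sum (w : C) : Cmod w <= Rabs (fst w) + Rabs (snd w).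
Proof.
  destruct w as [a b]. unfold Cmod; simpl.
  rewrite <- (sqrt_Rsqr (Rabs a + Rabs b)) by (pose proof (Rabs_pos a); pose proof (Rabs_pos b); lra).
  apply sqrt_le_1_alt. unfold Rsqr.
  pose proof (Rabs_pos a); pose proof (Rabs_pos b).
  replace (a * (a * 1) + b * (b * 1)) with (Rabs a * Rabs a + Rabs b * Rabs b).
  - nra.
  - rewrite <- !Rabs_mult. rewrite !Rabs_pos_eq by nra. ring.
Qed.

Lemma Cexp_shift (w : C) (c : R) : Cexp (Cminus w (RtoC c)) = Cmult (RtoC (exp (- c))) (Cexp w).
Proof.
  destruct w as [a b]. unfold Cexp, Cminus, Cplus, Copp, Cmult, RtoC; simpl.
  rewrite exp_plus, Ropp_0, Rplus_0_r.
  apply C_eq; simpl; ring.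
Qed.

Lemma bound_comb e p1 p2 D1 D2 rho T : 0 <= e -> Rabs p1 <= rho -> Rabs p2 <= rho ->
  Rabs D1 <= T -> Rabs D2 <= T ->
  Rabs (e * (p1 * D1 - p2 * D2)) <= 2 * e * rho * T /\ Rabs (e * (p1 * D2 + p2 * D1)) <= 2 * e * rho * T.
Proof.
  intros He H1 H2 H3 H4.
  pose proof (Rabs_pos p1). pose proof (Rabs_pos p2). pose proof (Rabs_pos D1). pose proof (Rabs_pos D2).
  assert (A : Rabs (p1 * D1) <= rho * T) by (rewrite Rabs_mult; apply Rmult_le_compat; auto).
  assert (B : Rabs (p2 * D2) <= rho * T) by (rewrite Rabs_mult; apply Rmult_le_compat; auto).
  assert (C0 : Rabs (p1 * D2) <= rho * T) by (rewrite Rabs_mult; apply Rmult_le_compat; auto).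
  assert (D : Rabs (p2 * D1) <= rho * T) by (rewrite Rabs_mult; apply Rmult_le_compat; auto).
  rewrite (Rabs_mult e), (Rabs_mult e), (Rabs_pos_eq e) by auto. split.
  - assert (H9 : Rabs (p1 * D1 - p2 * D2) <= Rabs (p1 * D1) + Rabs (p2 * D2)).
    { unfold Rminus. eapply Rle_trans; [apply Rabs_triang|]. rewrite Rabs_Ropp. lra. }
    replace (2 * e * rho * T) with (e * (rho * T + rho * T)) by ring.
    apply Rmult_le_compat_l; auto. lra.
  - pose proof (Rabs_triang (p1 * D2) (p2 * D1)).
    replace (2 * e * rho * T) with (e * (rho * T + rho * T)) by ring.
    apply Rmult_le_compat_l; auto. lra.
Qed.

Section FIN.
Variables (N : nat) (y : nat -> Z) (t r : R) (x : Z).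
Hypothesis HN : (1 <= N)%nat.
Hypothesis Hy : forall i : nat, (1 <= i)%nat -> (i < N)%nat -> (y i < y (S i))%Z.
Hypothesis Ht : 0 <= t.
Hypothesis Hr : 0 < r.

Let k := (x - y N)%Z.
Definition cc n := exp (- (INR N * t)) * (INR N * t) ^ n / INR (fact n).
Definition EE th := Cexp (Cmult (RtoC t)
                    (Cminus (Cplus (Cinv (Cmult (RtoC 2) (zeta r th))) (Cmult (zeta r th) (RtoC (/ 2))))
                            (RtoC 1))).
Definition zz th := Cmult (RtoC (INR N * t)) (Lz N r th).

Lemma INRN_nz : INR N <> 0.
Proof. apply not_0_INR; lia. Qed.

Lemma EE_eq th : EE th = Cmult (RtoC (exp (- (INR N * t)))) (Cexp (zz th)).
Proof.
  rewrite <- Cexp_shift. unfold EE. f_equal. unfold zz, Lz.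
  pose proof (zeta_nz r th Hr) as Hz. pose proof INRN_nz as HNz.
  rewrite minus_INR by lia. simpl INR.
  rewrite (RtoC_inv (2 * INR N)) by (apply Rmult_integral_contrapositive; split; lra).
  rewrite (RtoC_div (INR N - 1)) by auto.
  rewrite (RtoC_inv 2) by lra. rewrite RtoC_minus, !RtoC_mult.
  assert (HN' : RtoC (INR N) <> RtoC 0) by (intro E; apply HNz; injection E; auto).
  field. split; auto.
Qed.

Definition qq := INR (N - 1) / INR N.
Definition Lb := / (2 * INR N) * (2 * (r + / r)) + qq.
Definition RR := INR N * t * Lb.

Lemma qq_pos : 0 <= qq.
Proof. unfold qq. apply Rdiv_le_0_compat; [apply pos_INR|]. pose proof INRN_nz. pose proof (pos_INR N). lra. Qed.

Lemma Lz_comp th : Lz N r th = ((/ (2 * INR N) * ((r + / r) * cos th) + qq)%R, (/ (2 * INR N) * ((r - / r) * sin th))%R).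
Proof.
  unfold Lz. rewrite Cinv_zeta by auto. unfold qq, zeta. pose proof INRN_nz. apply C_eq; simpl; field; repeat split; auto; lra.
Qed.

Lemma L_bound th : Rabs (fst (Lz N r th)) + Rabs (snd (Lz N r th)) <= Lb.
Proof.
  rewrite Lz_comp. simpl. unfold Lb.
  pose proof qq_pos. pose proof INRN_nz. pose proof (pos_INR N).
  assert (Hi : 0 < / (2 * INR N)) by (apply Rinv_0_lt_compat; lra).
  assert (Hri : 0 < / r) by (apply Rinv_0_lt_compat; lra).
  pose proof (COS_bound th). pose proof (SIN_bound th).
  assert (A : Rabs ((r + / r) * cos th) <= r + / r).
  { rewrite Rabs_mult, Rabs_pos_eq by lra. rewrite <- (Rmult_1_r (r + / r)) at 2.
    apply Rmult_le_compat_l; [lra|]. apply Rabs_le; lra. }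
  assert (B : Rabs ((r - / r) * sin th) <= r + / r).
  { rewrite Rabs_mult. apply Rle_trans with (Rabs (r - / r) * 1).
    - apply Rmult_le_compat_l; [apply Rabs_pos|]. apply Rabs_le; lra.
    - rewrite Rmult_1_r. apply Rabs_le; lra. }
  eapply Rle_trans; [apply Rplus_le_compat; [apply Rabs_triang|right; reflexivity]|].
  rewrite (Rabs_pos_eq qq) by lra.
  rewrite (Rabs_mult (/ (2 * INR N)) ((r + / r) * cos th)), (Rabs_mult (/ (2 * INR N)) ((r - / r) * sin th)).
  rewrite (Rabs_pos_eq (/ (2 * INR N))) by lra.
  assert (/ (2 * INR N) * Rabs ((r + / r) * cos th) <= / (2 * INR N) * (r + / r)) by (apply Rmult_le_compat_l; lra).
  assert (/ (2 * INR N) * Rabs ((r - / r) * sin th) <= / (2 * INR N) * (r + / r)) by (apply Rmult_le_compat_l; lra).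
  lra.
Qed.

Lemma zz_bound th : Cmod (zz th) <= RR.
Proof.
  unfold zz, RR. rewrite Cmod_mult, Cmod_R, Rabs_pos_eq by (apply Rmult_le_pos; [apply pos_INR|auto]).
  apply Rmult_le_compat_l; [apply Rmult_le_pos; [apply pos_INR|auto]|].
  eapply Rle_trans; [apply Cmod_le_sum|apply L_bound].
Qed.

Definition uf th n := fst (Cpow (zz th) n) / INR (fact n).
Definition vf th n := snd (Cpow (zz th) n) / INR (fact n).
Definition Fm (M : nat) (th : R) : C :=
  sum_n (G := C_R_CompleteNormedModule) (fun n => scal (cc n) (Cmult (Pk r k th) (Cpow (Lz N r th) n))) M.

Lemma term_eq th n :
  @scal R_AbsRing C_R_NormedModule (cc n) (Cmult (Pk r k th) (Cpow (Lz N r th) n)) =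
  Cmult (Pk r k th) (Cmult (RtoC (exp (- (INR N * t)))) ((uf th n, vf th n) : C)).
Proof.
  rewrite scal_C. unfold uf, vf, zz, cc. rewrite Cpow_mult_l, <- RtoC_pow.
  destruct (Pk r k th) as [p1 p2]. destruct (Cpow (Lz N r th) n) as [a b].
  pose proof (INR_fact_neq_0 n).
  apply C_eq; simpl; field; auto.
Qed.

Lemma Fm_eq M th : Fm M th =
  Cmult (Pk r k th) (Cmult (RtoC (exp (- (INR N * t)))) ((sum_n (uf th) M, sum_n (vf th) M) : C)).
Proof.
  unfold Fm. induction M.
  - rewrite !sum_O. apply term_eq.
  - rewrite !sum_Sn. rewrite IHM.
    match goal with |- @plus ?G ?a ?b = _ => change (@plus G a b) with (Cplus a b) end.
    rewrite term_eq.
    change (@plus R_AbelianMonoid (sum_n (uf th) M) (uf th (S M))) with (sum_n (uf th) M + uf th (S M)).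
    change (@plus R_AbelianMonoid (sum_n (vf th) M) (vf th (S M))) with (sum_n (vf th) M + vf th (S M)).
    destruct (Pk r k th) as [p1 p2].
    apply C_eq; simpl; ring.
Qed.

Lemma RR_pos : 0 <= RR.
Proof.
  unfold RR, Lb. pose proof qq_pos. pose proof INRN_nz. pose proof (pos_INR N).
  assert (0 < / (2 * INR N)) by (apply Rinv_0_lt_compat; lra).
  assert (0 < / r) by (apply Rinv_0_lt_compat; lra).
  apply Rmult_le_pos; [apply Rmult_le_pos; auto|]. nra.
Qed.

Lemma uf_le th n : Rabs (uf th n) <= RR ^ n / INR (fact n).
Proof.
  unfold uf. rewrite Rabs_div by apply INR_fact_neq_0. rewrite (Rabs_pos_eq (INR (fact n))) by apply pos_INR.
  unfold Rdiv. apply Rmult_le_compat_r; [left; apply Rinv_0_lt_compat, INR_fact_lt_0|].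
  eapply Rle_trans; [apply fst_le_Cmod|]. rewrite Cmod_pow. apply pow_incr. split; [apply Cmod_ge_0|apply zz_bound].
Qed.
Lemma vf_le th n : Rabs (vf th n) <= RR ^ n / INR (fact n).
Proof.
  unfold vf. rewrite Rabs_div by apply INR_fact_neq_0. rewrite (Rabs_pos_eq (INR (fact n))) by apply pos_INR.
  unfold Rdiv. apply Rmult_le_compat_r; [left; apply Rinv_0_lt_compat, INR_fact_lt_0|].
  eapply Rle_trans; [apply snd_le_Cmod|]. rewrite Cmod_pow. apply pow_incr. split; [apply Cmod_ge_0|apply zz_bound].
Qed.

Definition TT M := exp RR - sum_n (fun n => RR ^ n / INR (fact n)) M.

Lemma uf_tail th M : Rabs (sum_n (uf th) M - fst (Cexp (zz th))) <= TT M.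
Proof.
  rewrite Rabs_minus_sym. apply tail_bound; [apply exp_fst|apply exp_series_pos|apply uf_le].
Qed.
Lemma vf_tail th M : Rabs (sum_n (vf th) M - snd (Cexp (zz th))) <= TT M.
Proof.
  rewrite Rabs_minus_sym. apply tail_bound; [apply exp_snd|apply exp_series_pos|apply vf_le].
Qed.

Lemma Pk_bound th : Rabs (fst (Pk r k th)) <= powerRZ r k /\ Rabs (snd (Pk r k th)) <= powerRZ r k.
Proof.
  unfold Pk; simpl. pose proof (powerRZ_lt r k Hr).
  rewrite !Rabs_mult, !(Rabs_pos_eq (powerRZ r k)) by lra.
  split; rewrite <- (Rmult_1_r (powerRZ r k)) at 2; apply Rmult_le_compat_l; try lra;
  apply Rabs_le; [pose proof (COS_bound (IZR k * th))|pose proof (SIN_bound (IZR k * th))]; lra.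
Qed.

Lemma unif : filterlim Fm eventually
  (locally (T := fct_UniformSpace R C_R_CompleteNormedModule) (fun th => Cmult (Pk r k th) (EE th))).
Proof.
  apply (filterlim_locally (F := eventually)). intros eps.
  set (e := exp (- (INR N * t))). set (rho := powerRZ r k).
  assert (He : 0 < e) by apply exp_pos. assert (Hrho : 0 < rho) by (apply powerRZ_lt; auto).
  set (B := 2 * e * rho + 1).
  assert (HB : 0 < B) by (unfold B; nra).
  assert (Hp : 0 < eps / B) by (apply Rdiv_lt_0_compat; [apply cond_pos|auto]).
  pose proof (series_ev _ _ (exp_series_pos RR) (mkposreal _ Hp)) as Hev.
  revert Hev. apply filter_imp. intros M HM th. simpl in HM.
  assert (HT : TT M < eps / B) by (unfold TT; rewrite Rabs_minus_sym in HM; pose proof (Rle_abs (exp RR - sum_n (fun n => RR ^ n / INR (fact n)) M)); lra).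
  assert (HT0 : 2 * e * rho * TT M < eps).
  { apply Rle_lt_trans with (2 * e * rho * (eps / B)).
    - apply Rmult_le_compat_l; [nra|lra].
    - apply Rlt_le_trans with (B * (eps / B)); [apply Rmult_lt_compat_r; auto; unfold B; lra|right; field; lra]. }
  rewrite Fm_eq, EE_eq. fold e.
  pose proof (uf_tail th M) as U1. pose proof (vf_tail th M) as U2.
  destruct (Pk_bound th) as [P1 P2].
  destruct (Pk r k th) as [p1 p2]. simpl fst in P1. simpl snd in P2.
  destruct (Cexp (zz th)) as [c1 c2]. simpl in U1, U2.
  destruct (bound_comb e p1 p2 _ _ rho (TT M) ltac:(lra) P1 P2 U1 U2) as [B1 B2].
  split; simpl.
  - apply ball_R. eapply Rle_lt_trans; [|apply HT0]. eapply Rle_trans; [|apply B1]. right. f_equal. ring.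
  - apply ball_R. eapply Rle_lt_trans; [|apply HT0]. eapply Rle_trans; [|apply B2]. right. f_equal. ring.
Qed.

Definition hM (M : nat) : C :=
  sum_n (G := C_R_CompleteNormedModule) (fun n => scal (cc n) (RtoC (2 * PI * m N y n x))) M.

Lemma Fm_int M : is_RInt (V := C_R_NormedModule) (Fm M) 0 (2 * PI) (hM M).
Proof.
  assert (Hx : (y N + k)%Z = x) by (unfold k; lia).
  assert (J : forall n, is_RInt (V := C_R_NormedModule)
     (fun th => Cmult (Pk r k th) (Cpow (Lz N r th) n)) 0 (2 * PI) (RtoC (2 * PI * m N y n x))).
  { intros n. rewrite <- Hx. apply J_int; auto. }
  unfold Fm, hM. induction M.
  - rewrite sum_O.
    apply (is_RInt_ext (V := C_R_NormedModule) (fun th => scal (cc 0) (Cmult (Pk r k th) (Cpow (Lz N r th) 0)))).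
    + intros th _. rewrite sum_O. reflexivity.
    + apply (is_RInt_scal (V := C_R_NormedModule)). apply J.
  - rewrite sum_Sn.
    apply (is_RInt_ext (V := C_R_NormedModule) (fun th => plus (sum_n (G := C_R_CompleteNormedModule) (fun n => scal (cc n) (Cmult (Pk r k th) (Cpow (Lz N r th) n))) M)
                                                         (scal (cc (S M)) (Cmult (Pk r k th) (Cpow (Lz N r th) (S M)))))).
    + intros th _. rewrite sum_Sn. reflexivity.
    + apply (is_RInt_plus (V := C_R_NormedModule)); [apply IHM|].
      apply (is_RInt_scal (V := C_R_NormedModule)). apply J.
Qed.

Lemma hM_eq M : hM M = ((sum_n (fun n => cc n * (2 * PI * m N y n x)) M)%R, 0%R).
Proof.
  unfold hM. induction M.
  - rewrite !sum_O. rewrite scal_C. apply C_eq; simpl; ring.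
  - rewrite !sum_Sn, IHM.
    match goal with |- @plus ?G ?a ?b = _ => change (@plus G a b) with (Cplus a b) end.
    rewrite scal_C. apply C_eq; simpl; unfold plus; simpl; ring.
Qed.

Lemma cc_series : is_series cc (exp (- (INR N * t)) * exp (INR N * t)).
Proof.
  eapply is_series_ext; [|apply (is_series_scal (K := R_AbsRing) (V := R_NormedModule) (exp (- (INR N * t)))); apply exp_series_pos].
  intros n. unfold cc, scal; simpl. unfold mult; simpl. unfold Rdiv; ring.
Qed.

Lemma cc_pos n : 0 <= cc n.
Proof.
  unfold cc. apply Rdiv_le_0_compat; [|apply INR_fact_lt_0].
  apply Rmult_le_pos; [left; apply exp_pos|]. apply pow_le. apply Rmult_le_pos; [apply pos_INR|auto].
Qed.

Lemma S_series : is_series (fun n => cc n * m N y n x) (sc_prob N (init_state N y) t x).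
Proof.
  unfold sc_prob. change (fun n => cc n * m N y n x) with
    (fun n => exp (- (INR N * t)) * (INR N * t) ^ n / INR (fact n) * mass_sc_at (jump_dist N (init_state N y) n) x).
  apply Series_correct.
  apply (ex_series_le (K := R_AbsRing) (V := R_CompleteNormedModule) _ cc).
  - intros n. unfold norm; simpl. unfold abs; simpl. fold (cc n). fold (m N y n x).
    destruct (m_bounds N y HN Hy n x).
    pose proof (cc_pos n).
    rewrite Rabs_mult, !Rabs_pos_eq by auto. nra.
  - eexists; apply cc_series.
Qed.

Lemma main_int : is_RInt (V := C_R_NormedModule) (fun th => Cmult (Pk r k th) (EE th)) 0 (2 * PI)
   (RtoC (2 * PI * sc_prob N (init_state N y) t x)).
Proof.
  destruct (filterlim_RInt (V := C_R_CompleteNormedModule) Fm 0 (2 * PI) eventually eventually_filter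
     (fun th => Cmult (Pk r k th) (EE th)) hM Fm_int unif) as [If [HIf HI]].
  set (S := sc_prob N (init_state N y) t x) in *.
  assert (Hball : forall eps : posreal, eventually (fun M => ball If eps (hM M))).
  { apply (filterlim_locally (F := eventually)). apply HIf. }
  assert (HS : is_series (fun n => cc n * (2 * PI * m N y n x)) (2 * PI * S)).
  { eapply is_series_ext; [|apply (is_series_scal (K := R_AbsRing) (V := R_NormedModule) (2 * PI)); apply S_series].
    intros n. unfold scal; simpl. unfold mult; simpl. ring. }
  assert (E1 : fst If = 2 * PI * S).
  { apply (lim_unique_R (sum_n (fun n => cc n * (2 * PI * m N y n x)))).
    - intros eps. generalize (Hball eps). apply filter_imp. intros M [H1 _].
      rewrite hM_eq in H1. apply ball_R in H1. simpl in H1. auto.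
    - apply series_ev; auto. }
  assert (E2 : snd If = 0).
  { apply (lim_unique_R (fun _ => 0)).
    - intros eps. generalize (Hball eps). apply filter_imp. intros M [_ H1].
      rewrite hM_eq in H1. apply ball_R in H1. simpl in H1. auto.
    - intros eps. exists O. intros. rewrite Rminus_0_r, Rabs_R0. apply cond_pos. }
  replace (RtoC (2 * PI * S)) with If; auto.
  destruct If as [a b]. simpl in E1, E2. subst. reflexivity.
Qed.
End FIN.


Lemma is_RInt_Ci (g : R -> C) a b l : is_RInt (V := C_R_NormedModule) g a b l ->
  is_RInt (V := C_R_NormedModule) (fun th => Cmult Ci (g th)) a b (Cmult Ci l).
Proof.
  intros H.
  replace (Cmult Ci l) with ((- snd l)%R, fst l) by (destruct l; apply C_eq; simpl; ring).
  apply (is_RInt_fct_extend_pair (U := R_NormedModule) (V := R_NormedModule)).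
  - pose proof (is_RInt_opp (V := R_NormedModule) _ _ _ _ (is_RInt_fct_extend_snd (U := R_NormedModule) (V := R_NormedModule) _ _ _ _ H)) as H2.
    apply (is_RInt_ext (V := R_NormedModule) (fun y => opp (snd (g y)))).
    + intros th _. destruct (g th); unfold opp; simpl; ring.
    + apply H2.
  - pose proof (is_RInt_fct_extend_fst (U := R_NormedModule) (V := R_NormedModule) _ _ _ _ H) as H2.
    apply (is_RInt_ext (V := R_NormedModule) (fun y => fst (g y))).
    + intros th _. destruct (g th); simpl; ring.
    + apply H2.
Qed.

Theorem corollary1p2 (N : nat) (y : nat -> Z) (t : R) :
  (1 <= N)%nat ->
  (forall i : nat, (1 <= i)%nat -> (i < N)%nat -> (y i < y (S i))%Z) ->
  0 <= t ->
  exists r0 : R, 0 < r0 /\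
    forall r : R, 0 < r < r0 ->
    forall x : Z,
      RtoC (sc_prob N (init_state N y) t x) =
      circle_integral
        (fun xi : C =>
           Cmult (Cpowz xi (x - y N - 1)%Z)
                 (Cexp (Cmult (RtoC t)
                    (Cminus (Cplus (Cinv (Cmult (RtoC 2) xi)) (Cmult xi (RtoC (/ 2))))
                            (RtoC 1)))))
        r.
Proof.
  intros HN Hy Ht. exists 1. split; [lra|]. intros r [Hr _] x.
  set (SS := sc_prob N (init_state N y) t x).
  pose proof (main_int N y t r x HN Hy Ht Hr) as H. fold SS in H.
  apply is_RInt_Ci in H.
  unfold circle_integral.
  rewrite (is_RInt_unique (V := C_R_CompleteNormedModule) _ 0 (2 * PI) (Cmult Ci (RtoC (2 * PI * SS)))).
  - assert (HPI : RtoC PI <> RtoC 0) by (intro E; injection E; pose proof PI_RGT_0; lra).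
    rewrite !RtoC_mult. field. split; [apply Ci_nz|auto].
  - apply (is_RInt_ext (V := C_R_NormedModule) (fun th => Cmult Ci (Cmult (Pk r (x - y N) th) (EE t r th)))); [|apply H].
    intros th _. change ((r * cos th)%R, (r * sin th)%R) with (zeta r th).
    rewrite Cpowz_zeta by auto.
    replace (x - y N - 1)%Z with ((x - y N) - 1)%Z by lia.
    rewrite Pk_pred by auto. unfold EE.
    pose proof (zeta_nz r th Hr).
    match goal with |- ?a = ?b => change (@eq C a b) end. field; auto.
Qed.
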